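(* Let $F\colon\mathcal{X}\to\mathcal{Y}$ be a uniformly expansive map of families of metric spaces. Suppose there is an ordinal $\alpha$ such that $F^{-1}(\mathcal{B})\in\mathfrak{C}_\alpha$ for every bounded family $\mathcal{B}\prec\mathcal{Y}$. If $\mathcal{Y}\in\mathfrak{C}_\beta$ for some ordinal $\beta$, then $\mathcal{X}\in\mathfrak{C}_{\alpha+\beta}$ (ordinal sum).
   Context: A map $F\colon\mathcal{X}\to\mathcal{Y}$ of families is a collection of maps $f\colon X_f\to Y_f$ with $\{X_f\}_{f\in F}=\mathcal{X}$ and $Y_f\in\mathcal{Y}$; $F^{-1}(\mathcal{B})=\{f^{-1}(B)\colon f\in F,B\in\mathcal{B}\}$ (with induced metrics). $F$ is uniformly expansive if there is a non-decreasing $\rho\colon[0,\infty)\to[0,\infty)$ with $d(f(x),f(x'))\le\rho(d(x,x'))$ for all $f\in F$, $x,x'\in X_f$. $\mathcal{B}\prec\mathcal{Y}$ means each $B\in\mathcal{B}$ is a subspace of some $Y\in\mathcal{Y}$. A family $\mathcal{U}$ of metric subspaces of $(X,d)$ is $r$-disjoint if $d(x,y)>r$ whenever $x\in U$, $y\in U'$, $U\neq U'$ in $\mathcal{U}$. For families $\mathcal{X},\mathcal{Y}$ and $R\in\mathbb{R}^{\mathbb{N}}$, $\mathcal{X}\xrightarrow{R}\mathcal{Y}$ means: there is an integer $k$ such that for each $X\in\mathcal{X}$ there are subcollections $\mathcal{U}_1,\dots,\mathcal{U}_k\subseteq\mathcal{Y}$ of subspaces of $X$, each $\mathcal{U}_i$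 being $R_i$-disjoint, with $\bigcup_i\mathcal{U}_i$ covering $X$. A family is bounded if the diameters of its members are uniformly bounded. $\mathfrak{C}_0$ is the class of bounded families; for an ordinal $\alpha>0$, $\mathfrak{C}_\alpha$ is the class of families $\mathcal{X}$ such that for every $R\in\mathbb{R}^{\mathbb{N}}$ there exist $\beta<\alpha$ and $\mathcal{Y}\in\mathfrak{C}_\beta$ with $\mathcal{X}\xrightarrow{R}\mathcal{Y}$. *)

(* Defs.v *)
From Stdlib Require Import Reals.
Open Scope R_scope.

Record MSpace := {
  carrier :> Type;
  mdist : carrier -> carrier -> R;
  mdist_refl : forall x, mdist x x = 0;
  mdist_sep : forall x y, mdist x y = 0 -> x = y;
  mdist_sym : forall x y, mdist x y = mdist y x;
  mdist_tri : forall x y z, mdist x z <= mdist x y + mdist y z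
}.

(** A metric space in a mfamily is a subset [S] of an ambient metric space
    [M], with the induced metric.  (A metric space [M] itself is [(M, full)].)
    This makes "subspace of a subspace" literally a subspace. *)
Definition space := { M : MSpace & carrier M -> Prop }.
Definition amb (X : space) : MSpace := projT1 X.
Definition pts (X : space) : carrier (amb X) -> Prop := projT2 X.

Definition mfamily := space -> Prop.

Definition subspace (U X : space) : Prop :=
  exists T : carrier (amb X) -> Prop,
    U = existT _ (amb X) T /\ (forall x, T x -> pts X x).

Definition prec (B Y : mfamily) : Prop :=
  forall U, B U -> exists Z, Y Z /\ subspace U Z.

Definition bounded_family (X : mfamily) : Prop :=
  exists D : R, forall Z, X Z ->
    forall x y, pts Z x -> pts Z y -> mdist (amb Z) x y <= D.

Definition pieces (Y : mfamily) (X : space) (T : carrier (amb X) -> Prop) : Prop :=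
  Y (existT _ (amb X) T) /\ (forall x, T x -> pts X x).

Definition decomposes (Rs : nat -> R) (X Y : mfamily) : Prop :=
  exists k : nat, forall Z, X Z ->
    exists U : nat -> (carrier (amb Z) -> Prop) -> Prop,
      (forall i, (1 <= i <= k)%nat -> forall T, U i T -> pieces Y Z T) /\
      (forall i, (1 <= i <= k)%nat -> forall T T', U i T -> U i T' -> T <> T' ->
          forall x y, T x -> T' y -> Rs i < mdist (amb Z) x y) /\
      (forall x, pts Z x -> exists i T, (1 <= i <= k)%nat /\ U i T /\ T x).

(** * Ordinals
    An ordinal is represented by an element [w] of a well-ordered type
    [(O, lt)]: the ordinal is the order type of the initial segment
    [{v | lt v w}].  In particular [w] represents 0 iff it has no predecessor. *)
Definition is_well_order {O : Type} (lt : O -> O -> Prop) : Prop :=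
  well_founded lt /\
  (forall x y z, lt x y -> lt y z -> lt x z) /\
  (forall x y, lt x y \/ x = y \/ lt y x).

(** [c] represents the ordinal sum [a + b]: [a <= c] and the interval
    [[a, c)] is order-isomorphic to the initial segment [[0, b)]. *)
Definition ord_sum {O : Type} (lt : O -> O -> Prop) (a b c : O) : Prop :=
  (a = c \/ lt a c) /\
  exists f : O -> O,
    (forall x, lt x b -> (a = f x \/ lt a (f x)) /\ lt (f x) c) /\
    (forall x y, lt x b -> lt y b -> lt x y -> lt (f x) (f y)) /\
    (forall y, (a = y \/ lt a y) -> lt y c -> exists x, lt x b /\ f x = y).

Inductive inC {O : Type} (lt : O -> O -> Prop) : O -> mfamily -> Prop :=
  | inC_zero : forall w X,
      (forall v, ~ lt v w) -> bounded_family X -> inC lt w X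
  | inC_succ : forall w X,
      (exists v, lt v w) ->
      (forall Rs : nat -> R, exists v Y, lt v w /\ inC lt v Y /\ decomposes Rs X Y) ->
      inC lt w X.

Record fmap := {
  fdom : space;
  fcod : space;
  fn : carrier (amb fdom) -> carrier (amb fcod)
}.

Definition is_family_map (F : fmap -> Prop) (X Y : mfamily) : Prop :=
  (forall f, F f -> forall x, pts (fdom f) x -> pts (fcod f) (fn f x)) /\
  (forall Z, X Z <-> exists f, F f /\ fdom f = Z) /\
  (forall f, F f -> Y (fcod f)).

Definition uniformly_expansive (F : fmap -> Prop) : Prop :=
  exists rho : R -> R,
    (forall a b, 0 <= a -> a <= b -> rho a <= rho b) /\
    (forall a, 0 <= a -> 0 <= rho a) /\
    (forall f, F f -> forall x x', pts (fdom f) x -> pts (fdom f) x' ->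
       mdist (amb (fcod f)) (fn f x) (fn f x') <= rho (mdist (amb (fdom f)) x x')).

Definition preimage_family (F : fmap -> Prop) (B : mfamily) : mfamily :=
  fun U => exists f T, F f /\ B (existT _ (amb (fcod f)) T) /\
    U = existT _ (amb (fdom f)) (fun x => pts (fdom f) x /\ T (fn f x)).

(* Main.v *)
Require Import Defs.
From Stdlib Require Import Reals.
From Stdlib Require Import Lra Lia Classical FunctionalExtensionality PropExtensionality.
Open Scope R_scope.

Lemma space_eta (Z : space) : existT _ (amb Z) (pts Z) = Z.
Proof. destruct Z; reflexivity. Qed.

Lemma mdist_nonneg (M : MSpace) x y : 0 <= mdist M x y.
Proof.
  pose proof (mdist_tri M x y x) as H. rewrite mdist_refl, (mdist_sym M y x) in H. lra.
Qed.

Lemma lt_irr {O : Type} (lt : O -> O -> Prop) : is_well_order lt -> forall x, ~ lt x x.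
Proof.
  intros [wf _] x. induction (wf x) as [x _ IH]. intro H. exact (IH x H H).
Qed.

Lemma inC_sub {O : Type} (lt : O -> O -> Prop) w X X' :
  inC lt w X -> (forall Z, X' Z -> X Z) -> inC lt w X'.
Proof.
  intros H Hs; destruct H as [w X H0 Hb | w X Hex Hd].
  - apply inC_zero; auto. destruct Hb as [D HD]; exists D; intros; eapply HD; eauto.
  - apply inC_succ; auto. intros Rs; destruct (Hd Rs) as [v [Y0 [Hv [HY Hdec]]]].
    exists v, Y0; repeat split; auto. destruct Hdec as [k Hk]; exists k; intros Z HZ; apply Hk; auto.
Qed.

Lemma inC_inv {O : Type} (lt : O -> O -> Prop) w X : inC lt w X ->
  ((forall v, ~ lt v w) /\ bounded_family X) \/
  ((exists v, lt v w) /\ (forall Rs : nat -> R, exists v Y, lt v w /\ inC lt v Y /\ decomposes Rs X Y)).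
Proof. intros H; destruct H; [left|right]; auto. Qed.

Lemma subspace_trans U V W : subspace U V -> subspace V W -> subspace U W.
Proof.
  intros [T1 [-> H1]] [T2 [-> H2]]. exists T1. split; [reflexivity|]. intros x Hx; apply H2, H1, Hx.
Qed.

Theorem mainTheorem11
  (O : Type) (lt : O -> O -> Prop) (HO : is_well_order lt)
  (X Y : mfamily) (F : fmap -> Prop)
  (HF : is_family_map F X Y) (Hexp : uniformly_expansive F)
  (alpha beta gamma : O) (Hsum : ord_sum lt alpha beta gamma)
  (Hpre : forall B : mfamily, bounded_family B -> prec B Y ->
            inC lt alpha (preimage_family F B))
  (HY : inC lt beta Y) :
  inC lt gamma X.
Proof.
  pose proof (lt_irr lt HO) as Hirr.
  pose proof HO as [Hwf [Htr Htri]].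
  revert X Y F HF Hexp gamma Hsum Hpre HY.
  induction (Hwf beta) as [beta _ IH].
  intros X Y F HF Hexp gamma Hsum Hpre HY.
  destruct HF as [HF1 [HF2 HF3]].
  destruct (inC_inv lt beta Y HY) as [[Hn Hb] | [Hex Hd]].
  - assert (gamma = alpha) as Heq.
    { destruct Hsum as [[Heq|Hlt] [g [Hg1 [Hg2 Hg3]]]]; auto.
      destruct (Hg3 alpha (or_introl eq_refl) Hlt) as [x [Hx _]].
      exfalso; eapply Hn; eauto. }
    subst gamma.
    apply inC_sub with (preimage_family F Y).
    + apply Hpre; auto. intros U HU; exists U; split; auto; exists (pts U); split;
        [symmetry; apply space_eta | auto].
    + intros Z HZ. destruct (proj1 (HF2 Z) HZ) as [f [Hf <-]].
      exists f, (pts (fcod f)). split; auto. split.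
      * rewrite space_eta; auto.
      * transitivity (existT (fun M : MSpace => carrier M -> Prop) (amb (fdom f)) (pts (fdom f))).
        { symmetry; apply space_eta. }
        f_equal. apply functional_extensionality; intros x; apply propositional_extensionality.
        split; [intros H; split; auto | tauto].
  - pose proof Hexp as [rho [Hmono [Hpos Hrho]]].
    destruct Hsum as [Hag [g [Hg1 [Hg2 Hg3]]]].
    apply inC_succ.
    { destruct Hex as [v Hv]. exists (g v). apply (Hg1 v Hv). }
    intros Rs.
    destruct (Hd (fun i => rho (Rs i))) as [v [Y' [Hv [HY' Hdec]]]].
    set (Y2 := fun W => Y' W /\ exists Z, Y Z /\ subspace W Z).
    set (restr := fun f (T : carrier (amb (fcod f)) -> Prop) =>
      Build_fmap (existT _ (amb (fdom f)) (fun x => pts (fdom f) x /\ T (fn f x)))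
                 (existT _ (amb (fcod f)) T) (fn f)).
    set (F2 := fun f' => exists f T, F f /\ Y2 (existT _ (amb (fcod f)) T) /\ f' = restr f T).
    set (X2 := fun Z => exists f', F2 f' /\ fdom f' = Z).
    exists (g v), X2. split; [apply Hg1; auto|split].
    + apply (IH v Hv X2 Y2 F2).
      * split; [|split].
        -- intros f' [f [T [Hf [HT ->]]]] x [Hx1 Hx2]. exact Hx2.
        -- intros Z; split; intro H; exact H.
        -- intros f' [f [T [Hf [HT ->]]]]. exact HT.
      * exists rho; split; [exact Hmono|split; [exact Hpos|]].
        intros f' [f [T [Hf [HT ->]]]] x x' [Hx _] [Hx' _]. exact (Hrho f Hf x x' Hx Hx').
      * split.
        -- exact (proj1 (Hg1 v Hv)).
        -- exists g. split; [|split].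
           ++ intros x Hx. assert (lt x beta) by eauto. split; [apply Hg1| apply Hg2]; auto.
           ++ intros x y Hx Hy Hxy; apply Hg2; eauto.
           ++ intros y Hy1 Hy2.
              assert (lt y gamma) as Hyg by (apply (Htr y (g v) gamma Hy2 (proj2 (Hg1 v Hv)))).
              destruct (Hg3 y Hy1 Hyg) as [x [Hx <-]]. exists x; split; auto.
              destruct (Htri x v) as [H|[H|H]]; auto.
              ** subst; exfalso; eapply Hirr; eauto.
              ** exfalso. pose proof (Hg2 v x Hv Hx H). apply (Hirr (g v)); eauto.
      * intros B HB HBY.
        set (B' := fun W => exists W', B W' /\ subspace W W').
        apply inC_sub with (preimage_family F B').
        -- apply Hpre.
           ++ destruct HB as [D HD]; exists D.
              intros Z [W' [HW' [T0 [-> HT0]]]] x y Hx Hy.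
              apply (HD W' HW' x y (HT0 x Hx) (HT0 y Hy)).
           ++ intros U [W' [HW' HUW']].
              destruct (HBY W' HW') as [W2 [[HW2a [Z [HZ HW2Z]]] HW'W2]].
              exists Z; split; auto. eapply subspace_trans; [eauto|]. eapply subspace_trans; eauto.
        -- intros U [f' [T [[f [T' [Hf [HT' ->]]]] [HBT ->]]]].
           exists f, (fun y => T' y /\ T y). split; auto. split.
           ++ exists (existT _ (amb (fcod f)) T). split; [exact HBT|].
              exists (fun y => T' y /\ T y). split; [reflexivity| intros; tauto].
           ++ cbn. f_equal. apply functional_extensionality; intros x;
                apply propositional_extensionality; tauto.
      * apply inC_sub with Y'; auto. intros W [H _]; exact H.
    + destruct Hdec as [k Hk]. exists k. intros Z HZ.
      destruct (proj1 (HF2 Z) HZ) as [f [Hf <-]].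
      destruct (Hk (fcod f) (HF3 f Hf)) as [U [HU1 [HU2 HU3]]].
      exists (fun i S => exists T, U i T /\ S = (fun x => pts (fdom f) x /\ T (fn f x))).
      split; [|split].
      * intros i Hi S [T [HT ->]]. destruct (HU1 i Hi T HT) as [HYT HTsub]. split.
        -- exists (restr f T). split; [|reflexivity].
           exists f, T. split; auto. split; [|reflexivity].
           split; [exact HYT|]. exists (fcod f); split; auto. exists T; split; auto.
        -- intros x [Hx _]; exact Hx.
      * intros i Hi S S' [T [HT ->]] [T' [HT' ->]] Hne x y [Hx HTx] [Hy HTy].
        assert (T <> T') as Hne' by (intro; subst; apply Hne; reflexivity).
        pose proof (HU2 i Hi T T' HT HT' Hne' (fn f x) (fn f y) HTx HTy) as H1. cbn in H1.
        pose proof (Hrho f Hf x y Hx Hy) as H2.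
        pose proof (mdist_nonneg (amb (fdom f)) x y) as H0.
        destruct (Rlt_or_le (Rs i) 0) as [H3|H3]; [lra|].
        destruct (Rlt_or_le (Rs i) (mdist _ x y)) as [H4|H4]; auto.
        pose proof (Hmono _ _ H0 H4). lra.
      * intros x Hx. destruct (HU3 (fn f x) (HF1 f Hf x Hx)) as [i [T [Hi [HT HTx]]]].
        exists i, (fun x => pts (fdom f) x /\ T (fn f x)). split; auto. split; [exists T; auto|].
        split; auto.
Qed.
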